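(* For every integer $n\geq 3$, the $n$-fan $F_n=P_{n+1}\lor K_1$ satisfies $\eta(F_n)=2$.
   Context: All graphs are finite, simple and undirected. $P_{n+1}$ is the path with $n+1$ vertices (length $n$), $K_1$ is the graph with one vertex, and $G_1\lor G_2$ (join) is the graph on $V(G_1)\cup V(G_2)$ with edges $E(G_1)\cup E(G_2)\cup\{(u,v):u\in V(G_1),v\in V(G_2)\}$. For a vertex $v$, $N(v)$ is its set of neighbours. For a positive integer $k$, $[k]=\{1,\dots,k\}$. For a labeling $f:V(G)\to[k]$ and $S\subseteq V(G)$, $f(S)=\sum_{u\in S}f(u)$. A labeling $f:V(G)\to[k]$ is an additive $k$-coloring if $f(N(u))\neq f(N(v))$ for every edge $(u,v)$ of $G$. The additive chromatic number $\eta(G)$ is the least $k$ for which $G$ has an additive $k$-coloring. *)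

(* Defs.v *)
From mathcomp Require Import all_boot.
Unset Printing Implicit Defensive.

Record sgraph := SGraph {
  vtx :> finType;
  adj : rel vtx;
  adj_sym : symmetric adj;
  adj_irr : irreflexive adj }.

Definition nbhd {G : sgraph} (v : G) : {set G} := [set u | adj G v u].

Definition fsum {G : sgraph} (f : G -> nat) (S : {set G}) : nat :=
  \sum_(u in S) f u.

Definition additive_coloring (G : sgraph) (k : nat) (f : G -> nat) : Prop :=
  (forall v, 1 <= f v <= k) /\
  (forall u v, adj G u v -> fsum f (nbhd u) <> fsum f (nbhd v)).

Definition additive_colorable (G : sgraph) (k : nat) : Prop :=
  exists f : G -> nat, additive_coloring G k f.

Definition additive_chromatic_number_is (G : sgraph) (k : nat) : Prop :=
  0 < k /\ additive_colorable G k /\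
  (forall j, 0 < j < k -> ~ additive_colorable G j).

(* The fan F_n = P_{n+1} \/ K_1 : vertices None (the apex, K_1) and
   Some i, i : 'I_(n+1) (the path P_{n+1}: i ~ i+1). *)
Definition fan_adj (n : nat) : rel (option 'I_n.+1) :=
  fun x y => match x, y with
  | None, None => false
  | None, Some _ | Some _, None => true
  | Some i, Some j => (i.+1 == j :> nat) || (j.+1 == i :> nat)
  end.

Lemma fan_adj_sym n : symmetric (fan_adj n).
Proof. by move=> [i|] [j|] //=; rewrite orbC. Qed.

Lemma fan_adj_irr n : irreflexive (fan_adj n).
Proof.
move=> [i|] //=; apply/negP => /orP [] /eqP H;
  by have := n_Sn i; rewrite H; move=> /(_ erefl).
Qed.

Definition fan (n : nat) : sgraph :=
  @SGraph _ (fan_adj n) (@fan_adj_sym n) (@fan_adj_irr n).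

(* Main.v *)
Require Import Defs.
From mathcomp Require Import all_boot zify.
Lemma sum_option (T : finType) (F : option T -> nat) :
  \sum_(u : option T) F u = F None + \sum_(j : T) F (Some j).
Proof.
rewrite (bigD1 None) //=; congr (_ + _).
rewrite (reindex_omap Some (fun u => u)) //=; last by case.
by apply: eq_bigl => j; rewrite eqxx.
Qed.

Definition mkf {n} (c : nat) (g : nat -> nat) : fan n -> nat :=
  fun u => match u with None => c | Some j => g (nat_of_ord j) end.

Lemma nb_some n c g (i : 'I_n.+1) :
  fsum (mkf c g) (nbhd (Some i : fan n)) =
  c + (if 0 < i then g i.-1 else 0) + (if i < n then g i.+1 else 0).
Proof.
rewrite /fsum big_mkcond sum_option /= !in_set /=.
rewrite -addnA; congr (_ + _).
rewrite (eq_bigr (fun j : 'I_n.+1 => (if (0 < i) && (j == i.-1 :> nat) then g j else 0)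
     + (if j == i.+1 :> nat then g j else 0))); last first.
  move=> j _; rewrite in_set /=.
  case E1: (i.+1 == j); case E2: (j.+1 == i); case E3: (0 < i);
  case E4: (j == i.-1 :> nat); case E5: (j == i.+1 :> nat);
  rewrite /= ?addn0 ?add0n //; lia.
rewrite big_split /= -big_mkcond -[X in _ + X]big_mkcond /=.
rewrite big_ord1_eq.
have -> : \sum_(j < n.+1 | (0 < i) && (j == i.-1 :> nat)) g j = if 0 < i then g i.-1 else 0.
  case: (ltnP 0 i) => Hi /=; last by rewrite big_pred0.
  rewrite big_ord1_eq ifT //; have := ltn_ord i; lia.
by rewrite ltnS.
Qed.

Lemma nb_none n c g :
  fsum (mkf c g) (nbhd (None : fan n)) = \sum_(j < n.+1) g j.
Proof.
rewrite /fsum big_mkcond sum_option /= !in_set /=.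
by apply: eq_bigr => j _; rewrite in_set.
Qed.

Definition gg n j := if odd j && (j != n) then 1 else 2.
Definition hh n k := 1 + (if 0 < k then gg n k.-1 else 0) + (if k < n then gg n k.+1 else 0).

Lemma key n i : 3 <= n -> i < n -> hh n i <> hh n i.+1.
Proof.
move=> Hn Hi; rewrite /hh /gg.
case: i Hi => [|m] Hi /=.
  case E1: (1 != n); case E2: (0 < n); case E3: (2 == n); case E4: (1 < n);
  rewrite /= ?E1 ?E2 ?E3 ?E4 /=; lia.
rewrite !negbK.
case: (odd m) => /=;
case E1: (m != n); case E2: (m.+2 != n); case E3: (m.+1 != n); case E4: (m.+1 < n);
case E5: (m.+2 < n); case E6: (m.+3 != n); rewrite /= ?E1 ?E2 ?E3 ?E4 ?E5 ?E6 /=; lia.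
Qed.

Lemma mkf_eq n (f : fan n -> nat) c g : (forall u, f u = mkf c g u) ->
  forall S, fsum f S = fsum (mkf c g) S.
Proof. by move=> H S; apply: eq_bigr => u _; rewrite H. Qed.

Theorem mainTheorem6 (n : nat) : 3 <= n -> additive_chromatic_number_is (fan n) 2.
Proof.
move=> Hn; split => //; split.
  exists (mkf 1 (gg n)); split.
    by case=> [j|] //=; rewrite /gg; case: ifP.
  have bnd : forall i : 'I_n.+1, fsum (mkf 1 (gg n)) (nbhd (Some i : fan n)) < 6.
    move=> i; rewrite nb_some /gg.
    case: ifP => _; case: ifP => _; try case: ifP => _; try case: ifP => _; lia.
  have low : 6 <= fsum (mkf 1 (gg n)) (nbhd (None : fan n)).
    rewrite nb_none -(big_mkord xpredT (gg n)) (@big_cat_nat _ _ _ 4) //=.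
    have -> : \sum_(0 <= i < 4) gg n i = gg n 0 + gg n 1 + gg n 2 + gg n 3.
      by rewrite big_mkord !big_ord_recr big_ord0.
    have : forall j, 1 <= gg n j by move=> j; rewrite /gg; case: ifP.
    move=> H; have := H 1; have := H 3.
    have -> : gg n 0 = 2 by []. have -> : gg n 2 = 2 by []. lia.
  case=> [i|] [j|] //= Hadj.
  - case/orP: Hadj => /eqP E.
      have Hi : i < n by have := ltn_ord j; lia.
      rewrite !nb_some -E; exact: (key _ _ Hn Hi).
    have Hj : j < n by have := ltn_ord i; lia.
    rewrite !nb_some -E => H; exact: (key _ _ Hn Hj (esym H)).
  - move=> E; move: (bnd i) low; rewrite E => A B.
    by have := leq_ltn_trans B A; rewrite ltnn.
  - move=> E; move: (bnd j) low; rewrite -E => A B.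
    by have := leq_ltn_trans B A; rewrite ltnn.
move=> k /andP [Hk1 Hk2] [f [Hf Hadd]].
have Ek : k = 1 by lia.
subst k.
have Hfe : forall u, f u = mkf 1 (fun _ => 1) u by move=> u; have := Hf u; case: u => [j|] /=; lia.
have H1 : 1 < n.+1 by lia.
have H2 : 2 < n.+1 by lia.
have := Hadd (Some (inord 1)) (Some (inord 2)).
rewrite /= !inordK // !(mkf_eq _ _ _ _ Hfe) !nb_some !inordK //=.
have -> : 1 < n by lia.
have -> : 2 < n by lia.
by apply.
Qed.
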